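(* Let $m \ge 5$ be odd and $n = 3^m-1$. Then the ternary cyclic code $\mathcal{C}_{(1,2,m)}$ has parameters $[n,k,d]$ with $d \ge \frac{3^{(m-1)/2}+13}{2}$ if $m \equiv 1 \pmod 4$ and $d \ge \frac{3^{(m-1)/2}+11}{2}$ if $m \equiv 3 \pmod 4$, and $k = \frac{n}{2}$ if $m \equiv 1 \pmod 4$ and $k = \frac{n+2}{2}$ if $m \equiv 3 \pmod 4$.
   Context: Let $m \ge 2$ be an integer, $n = 3^m-1$, and let $\alpha$ be a primitive element of $\mathbb{F}_{3^m}$. For an integer $0 \le j \le n-1$ with $3$-adic expansion $j = \sum_{t=0}^{m-1} j_t 3^t$, $j_t \in \{0,1,2\}$, let $w_3(j) = \sum_{t=0}^{m-1} j_t$. For distinct $i_1, i_2 \in \{0,1,2,3\}$ let $T_{(i_1,i_2,m)} = \{1 \le j \le n-1 : w_3(j) \equiv i_1 \text{ or } i_2 \pmod 4\}$ and $g_{(i_1,i_2,m)}(x) = \prod_{j \in T_{(i_1,i_2,m)}} (x - \alpha^j) \in \mathbb{F}_3[x]$. $\mathcal{C}_{(i_1,i_2,m)}$ denotes the ternary cyclic code of length $n$ with generator polynomial $g_{(i_1,i_2,m)}(x)$. Parameters $[n,k,d]$ mean length, dimension over $\mathbb{F}_3$, and minimum Hamming distance. *)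

(* Defs.v *)
From HB Require Import structures.
From mathcomp Require Import all_boot all_order all_algebra.
Set Implicit Arguments. Unset Strict Implicit. Unset Printing Implicit Defensive.
Import GRing.Theory.
Local Open Scope ring_scope.

Definition w3 (m j : nat) : nat := (\sum_(t < m) (j %/ 3 ^ t %% 3))%N.

Definition Tset (i1 i2 m : nat) : {set 'I_(3 ^ m - 1)} :=
  [set j : 'I_(3 ^ m - 1) | (0 < j)%N &&
     ((w3 m j %% 4 == i1 %% 4)%N || (w3 m j %% 4 == i2 %% 4)%N)].

(* The generator polynomial g_(i1,i2,m)(x) = prod_{j in T} (x - alpha^j), computed in F[x]
   where F is the field with 3^m elements and alpha a primitive element. *)
Definition gpoly (F : finFieldType) (alpha : F) (i1 i2 m : nat) : {poly F} :=
  \prod_(j in Tset i1 i2 m) ('X - (alpha ^+ j)%:P).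

Definition emb3 (F : finFieldType) (a : 'F_3) : F := (val a)%:R.

Definition word_poly (n : nat) (c : 'rV['F_3]_n) : {poly 'F_3} := \sum_(i < n) (c 0 i)%:P * 'X^i.

(* The ternary cyclic code of length n = 3^m - 1 with generator polynomial g:
   the words whose polynomial is a multiple of g (i.e. the ideal (g) in F_3[x]/(x^n - 1)). *)
Definition cyc_code (F : finFieldType) (alpha : F) (i1 i2 m : nat) : {set 'rV['F_3]_(3 ^ m - 1)} :=
  [set c | gpoly alpha i1 i2 m %| map_poly (@emb3 F) (word_poly c)].

Definition code_dim (n : nat) (C : {set 'rV['F_3]_n}) : nat := \dim (<<enum C>>)%VS.

Definition hwt (n : nat) (c : 'rV['F_3]_n) : nat := #|[set i : 'I_n | c 0 i != 0]|.
Definition hdist (n : nat) (c c' : 'rV['F_3]_n) : nat := hwt (c - c').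

(* Main.v *)
Require Import Defs.
From HB Require Import structures.
From mathcomp Require Import all_boot all_order all_algebra all_field zify ring.
Import GRing.Theory.

Lemma w3_0 j : w3 0 j = 0%N.
Proof. by rewrite /w3 big_ord0. Qed.

Lemma w3S m j : w3 m.+1 j = (j %% 3 + w3 m (j %/ 3))%N.
Proof.
rewrite /w3 big_ord_recl expn0 divn1; congr (_ + _)%N.
by apply: eq_bigr => i _; rewrite /= expnS divnMA.
Qed.

Lemma w3S' m q r : (r < 3)%N -> w3 m.+1 (3 * q + r) = (r + w3 m q)%N.
Proof.
move=> hr; rewrite w3S; congr (_ + w3 m _)%N; lia.
Qed.

Lemma w3_dec y : exists q r, (r < 3)%N /\ y = (3 * q + r)%N.
Proof. exists (y %/ 3), (y %% 3); split; first by rewrite ltn_mod. by rewrite mulnC -divn_eq. Qed.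

Lemma w3cat a b x y : (y < 3 ^ a)%N -> w3 (a + b) (x * 3 ^ a + y) = (w3 a y + w3 b x)%N.
Proof.
elim: a y => [|a IH] y hy.
  by move: hy; rewrite expn0 ltnS leqn0 => /eqP ->; rewrite w3_0 !add0n muln1 addn0.
have [q [r [hr hyq]]] := w3_dec y; subst y.
have hq : (q < 3 ^ a)%N by move: hy; rewrite expnS; lia.
have -> : (x * 3 ^ a.+1 + (3 * q + r) = 3 * (x * 3 ^ a + q) + r)%N by rewrite expnS; lia.
by rewrite addSn !w3S' // IH // addnA.
Qed.

Lemma w3compl m y : (y < 3 ^ m)%N -> w3 m (3 ^ m - 1 - y) = (2 * m - w3 m y)%N.
Proof.
have wle : forall m y, (w3 m y <= 2 * m)%N.
  elim=> [|k IH] z; first by rewrite w3_0.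
  rewrite w3S; have := IH (z %/ 3); have : (z %% 3 < 3)%N by rewrite ltn_mod. lia.
elim: m y => [|m IH] y hy; first by rewrite !w3_0.
have [q [r [hr hyq]]] := w3_dec y; subst y.
have hq : (q < 3 ^ m)%N by move: hy; rewrite expnS; lia.
have -> : (3 ^ m.+1 - 1 - (3 * q + r) = 3 * (3 ^ m - 1 - q) + (2 - r))%N.
  rewrite expnS; have : (0 < 3 ^ m)%N by rewrite expn_gt0. lia.
rewrite !w3S' ?IH //; last by lia.
have := wle m q; lia.
Qed.

Lemma w3odd m y : (y < 3 ^ m)%N -> odd (w3 m y) = odd y.
Proof.
elim: m y => [|m IH] y hy.
  by move: hy; rewrite expn0 ltnS leqn0 => /eqP ->; rewrite w3_0.
have [q [r [hr hyq]]] := w3_dec y; subst y.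
have hq : (q < 3 ^ m)%N by move: hy; rewrite expnS; lia.
rewrite w3S' // !oddD IH //; by case: (odd q); case: (odd r).
Qed.

Lemma w3small h y : (y < 3 ^ h)%N -> w3 h.+1 y = w3 h y.
Proof. move=> hy; have := w3cat h 1 0 y hy; rewrite mul0n add0n addn1 => ->. by rewrite /w3 big_ord1 div0n mod0n addn0. Qed.

Lemma w3zero m : w3 m 0 = 0%N.
Proof. by rewrite /w3 big1 // => i _; rewrite div0n mod0n. Qed.

Section Arith.
Local Notation X R := (2 * R + 1)%N.
Local Notation n R := (12 * R * R + 12 * R + 2)%N.

Lemma O1 R q a : (4 <= R)%N -> (a + (2 * q + 1) = R)%N ->
  let x := ((1 * X R + a) * X R + a)%N in
  ((6*R*R+4*R-1) * (2*q+1) = q * n R + x /\ 0 < x < n R)%N.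
Proof. move=> hR ha /=. split; nia. Qed.

Lemma O2 R q : (4 <= R)%N -> (R + 2 = 2 * q + 1)%N ->
  let x := ((X R - 1 - 2) * X R + (X R - 1 - 1))%N in
  ((6*R*R+4*R-1) * (2*q+1) = q * n R + x /\ 0 < x < n R)%N.
Proof. move=> hR ha /=. split; nia. Qed.

Lemma O3 R q : (4 <= R)%N -> (R + 4 = 2 * q + 1)%N ->
  let x := ((X R - 1 - 4) * X R + (X R - 1 - 3))%N in
  ((6*R*R+4*R-1) * (2*q+1) = q * n R + x /\ 0 < x < n R)%N.
Proof. move=> hR ha /=. split; nia. Qed.

Lemma O4 R q : (4 <= R)%N -> (2 * q + 2 <= R + 6)%N ->
  let y := ((2 * q + 2) * X R + (2 * q + 2))%N in
  ((6*R*R+4*R-1) * (2*q+2) = q * n R + (n R - y) /\ 0 < y < n R)%N.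
Proof. move=> hR ha /=. split; nia. Qed.

Lemma E1 R q a : (4 <= R)%N -> (a + (2 * q + 1) = R)%N ->
  let x := ((1 * X R + a) * X R + (X R - 1 - a))%N in
  ((6*R*R+4*R+1) * (2*q+1) = q * n R + x /\ 0 < x < n R)%N.
Proof. move=> hR ha /=. split; nia. Qed.

Lemma E2 R q : (4 <= R)%N -> (R + 1 = 2 * q + 1)%N ->
  let x := ((1 * X R + 0) * X R + 0)%N in
  ((6*R*R+4*R+1) * (2*q+1) = q * n R + x /\ 0 < x < n R)%N.
Proof. move=> hR ha /=. split; nia. Qed.

Lemma E3 R q : (4 <= R)%N -> (R + 3 = 2 * q + 1)%N ->
  let x := ((X R - 1 - 1) * X R + 2)%N in
  ((6*R*R+4*R+1) * (2*q+1) = q * n R + x /\ 0 < x < n R)%N.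
Proof. move=> hR ha /=. have eR : R = (2*q - 2)%N by lia. subst R. split; nia. Qed.

Lemma E4 R q : (4 <= R)%N -> (R + 5 = 2 * q + 1)%N ->
  let x := ((X R - 1 - 3) * X R + 4)%N in
  ((6*R*R+4*R+1) * (2*q+1) = q * n R + x /\ 0 < x < n R)%N.
Proof. move=> hR ha /=. split; nia. Qed.

Lemma E5 R q : (4 <= R)%N -> (2 * q + 2 <= 2 * R + 1)%N ->
  let y := ((2 * q + 1) * X R + (X R - 1 - (2 * q + 1)))%N in
  ((6*R*R+4*R+1) * (2*q+2) = q * n R + (n R - y) /\ 0 < y < n R)%N.
Proof.
move=> hR ha /=.
have -> : ((2 * q + 1) * (2 * R + 1) + (2 * R + 1 - 1 - (2 * q + 1)) = (2 * q + 2) * (2 * R))%N by nia.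
split; nia. Qed.
End Arith.

Lemma I1 s : let R := (2 * s + 1)%N in
  ((6*R*R+4*R-1) * (3 * R) = (3 * s + 1) * (12 * R * R + 12 * R + 2) + 1)%N.
Proof. move=> R; rewrite /R; nia. Qed.

Lemma I2 s : let R := (2 * s)%N in
  ((6*R*R+4*R+1) * (3 * (R + 1)) = (3 * s + 1) * (12 * R * R + 12 * R + 2) + 1)%N.
Proof. move=> R; rewrite /R; nia. Qed.


Lemma w3sm h j : (2 <= h)%N -> (j < 9)%N -> w3 h j = (j %% 3 + j %/ 3)%N.
Proof.
case: h => [|[|h]] // _ hj; rewrite !w3S.
have -> : (j %/ 3 %/ 3 = 0)%N by rewrite -divnMA divn_small.
rewrite w3zero addn0; congr (_ + _)%N; apply: modn_small; lia.
Qed.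

Lemma exp3mod4 h : (3 ^ h %% 4 = if odd h then 3 else 1)%N.
Proof.
elim: h => [//|h IH]; rewrite expnS /= -modnMmr IH; by case: (odd h).
Qed.

Definition uu (h : nat) : nat :=
  let n := (3 ^ (h + h.+1) - 1)%N in
  if odd h then (n %/ 2 - (3 ^ h + 1))%N else (n %/ 2 - (3 ^ h - 1))%N.
Definition LL (h : nat) : nat := if odd h then ((3 ^ h + 9) %/ 2)%N else ((3 ^ h + 11) %/ 2)%N.

Definition goodx (h x : nat) : Prop :=
  (0 < x)%N /\ (x < 3 ^ (h + h.+1) - 1)%N /\
  ((w3 (h + h.+1) x %% 4 == 1) || (w3 (h + h.+1) x %% 4 == 2))%N.

Lemma key h k : (2 <= h)%N -> (1 <= k <= LL h)%N ->
  exists q x, (uu h * k = q * (3 ^ (h + h.+1) - 1) + x)%N /\ goodx h x.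
Proof.
move=> h2 /andP[k1 kL].
set X := (3 ^ h)%N.
have X9 : (9 <= X)%N by rewrite /X (leq_trans _ (leq_pexp2l _ h2)).
have e3 : (3 ^ (h + h.+1) = 3 * X * X)%N by rewrite expnD expnS /X; lia.
set R := (X %/ 2)%N.
have XR : X = (2 * R + 1)%N.
  have := exp3mod4 h; rewrite -/X => hm; rewrite /R; case: (odd h) hm => hm; lia.
have Rpar : odd R = odd h.
  have := exp3mod4 h; rewrite -/X XR => hm.
  case: (odd h) hm => hm; apply/eqP; rewrite ?eqb_id ?eqbF_neg; apply/negP => /=; lia.
set n := (3 ^ (h + h.+1) - 1)%N.
have hn : (n + 1 = 3 * X * X)%N by rewrite /n e3; lia.
set N2 := (n %/ 2)%N.
have hN2 : (2 * N2 = n)%N by rewrite /N2 /n e3 XR; lia.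
have R4 : (4 <= R)%N by lia.
have hnR : n = (12 * R * R + 12 * R + 2)%N by rewrite XR in hn; lia.
have wcat : forall hi lo, (lo < X)%N -> w3 (h + h.+1) (hi * X + lo) = (w3 h lo + w3 h.+1 hi)%N.
  by move=> hi lo hl; apply: w3cat.
have wcompl : forall y, (y <= n)%N -> w3 (h + h.+1) (n - y) = (2 * (h + h.+1) - w3 (h + h.+1) y)%N.
  by move=> y hy; rewrite /n w3compl //; move: hy; rewrite /n; lia.
have wcomplh : forall y, (y < X)%N -> w3 h (X - 1 - y) = (2 * h - w3 h y)%N.
  by move=> y hy; rewrite /X w3compl.
have wsmall : forall y, (y < X)%N -> w3 h.+1 y = w3 h y by move=> y hy; apply: w3small.
have wtop : forall a, (a < X)%N -> w3 h.+1 (1 * X + a) = (w3 h a + 1)%N.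
  move=> a ha; have := w3cat h 1 1 a ha; rewrite addn1 => ->.
  by rewrite /w3 big_ord1 /= divn1.
have wpar : forall y, (y < X)%N -> (w3 h y %% 2 = y %% 2)%N.
  by move=> y hy; rewrite !modn2 w3odd.
have w3le : forall y, (w3 h y <= 2 * h)%N.
  move=> y; elim: (h) y => [|g IH] y; first by rewrite w3_0.
  rewrite w3S; have := IH (y %/ 3); have : (y %% 3 < 3)%N by rewrite ltn_mod. lia.
have ws0 : w3 h 0 = 0%N by rewrite w3zero.
have ws1 : w3 h 1 = 1%N by rewrite w3sm.
have ws2 : w3 h 2 = 2%N by rewrite w3sm.
have ws3 : w3 h 3 = 1%N by rewrite w3sm.
have ws4 : w3 h 4 = 2%N by rewrite w3sm.
have hpar : (h %% 2 = odd h)%N by rewrite modn2.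
have kpar : (k %% 2 = odd k)%N by rewrite modn2.
have Rpar' : (R %% 2 = odd h)%N by rewrite modn2 Rpar.
rewrite /goodx -/n /uu -/n -/N2 -/X.
move: kL hpar Rpar'; rewrite /LL -/X.
case: (boolP (odd h)) => oh kL hpar Rpar'; move: hpar Rpar' => /= hpar Rpar'.
  have huR : (N2 - (X + 1) = 6 * R * R + 4 * R - 1)%N by rewrite XR in hN2 *; lia.
  rewrite huR.
  move: kpar; case: (boolP (odd k)) => ok kpar; move: kpar => /= kpar.
    set q := (k %/ 2)%N; have hk : k = (2 * q + 1)%N by rewrite /q; lia.
    have [kR|Rk] := leqP k R.
      set a := (R - k)%N; have ha : (a + (2 * q + 1) = R)%N by rewrite /a; lia.
      have [e b] := O1 R q a R4 ha; rewrite -XR -hnR -hk in e b.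
      exists q, ((1 * X + a) * X + a); split; first by [].
      have := wpar a; rewrite wcat ?wtop; lia.
    have [k2|k4] : (R + 2 = 2 * q + 1 \/ R + 4 = 2 * q + 1)%N by lia.
      have [e b] := O2 R q R4 k2; rewrite -XR -hnR -hk in e b.
      exists q, ((X - 1 - 2) * X + (X - 1 - 1)); split; first by [].
      rewrite wcat ?wsmall ?wcomplh; lia.
    have [e b] := O3 R q R4 k4; rewrite -XR -hnR -hk in e b.
    exists q, ((X - 1 - 4) * X + (X - 1 - 3)); split; first by [].
    rewrite wcat ?wsmall ?wcomplh; lia.
  set q := (k %/ 2 - 1)%N; have hk : k = (2 * q + 2)%N by rewrite /q; lia.
  have hq : (2 * q + 2 <= R + 6)%N by lia.
  have [e b] := O4 R q R4 hq; rewrite -XR -hnR -hk in e b.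
  exists q, (n - (k * X + k)); split; first by [].
  have := wpar k; have := w3le k; rewrite wcompl ?wcat ?wsmall; lia.
have huR : (N2 - (X - 1) = 6 * R * R + 4 * R + 1)%N by rewrite XR in hN2 *; lia.
rewrite huR.
move: kpar; case: (boolP (odd k)) => ok kpar; move: kpar => /= kpar.
  set q := (k %/ 2)%N; have hk : k = (2 * q + 1)%N by rewrite /q; lia.
  have [kR|Rk] := leqP k R.
    set a := (R - k)%N; have ha : (a + (2 * q + 1) = R)%N by rewrite /a; lia.
    have [e b] := E1 R q a R4 ha; rewrite -XR -hnR -hk in e b.
    exists q, ((1 * X + a) * X + (X - 1 - a)); split; first by [].
    have := w3le a; rewrite wcat ?wtop ?wcomplh; lia.
  have [kk1|[k3|k5]] : (R + 1 = 2 * q + 1 \/ R + 3 = 2 * q + 1 \/ R + 5 = 2 * q + 1)%N by lia.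
      have [e b] := E2 R q R4 kk1; rewrite -XR -hnR -hk in e b.
      exists q, ((1 * X + 0) * X + 0); split; first by [].
      rewrite wcat ?wtop; lia.
    have [e b] := E3 R q R4 k3; rewrite -XR -hnR -hk in e b.
    exists q, ((X - 1 - 1) * X + 2); split; first by [].
    rewrite wcat ?wsmall ?wcomplh; lia.
  have [e b] := E4 R q R4 k5; rewrite -XR -hnR -hk in e b.
  exists q, ((X - 1 - 3) * X + 4); split; first by [].
  rewrite wcat ?wsmall ?wcomplh; lia.
set q := (k %/ 2 - 1)%N; have hk : k = (2 * q + 2)%N by rewrite /q; lia.
have [hq|hq] := leqP (2 * q + 2) (2 * R + 1).
  have [e b] := E5 R q R4 hq; rewrite -XR -hnR -hk in e b.
  exists q, (n - ((2 * q + 1) * X + (X - 1 - (2 * q + 1)))); split; first by [].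
  have := w3le (2 * q + 1); rewrite wcompl ?wcat ?wsmall ?wcomplh; lia.
have R4' : R = 4%N by lia.
have hX : X = 9%N by lia.
have h2' : h = 2%N.
  case: (leqP h 2) => h3; first lia.
  by have := leq_pexp2l (isT : (0 < 3)%N) h3; rewrite -/X; lia.
have k10 : k = 10%N by lia.
exists 4%N, 162%N; rewrite hnR R4' k10 h2' /w3 !big_ord_recl big_ord0 /=.
by [].
Qed.

Lemma uu_inv h : (2 <= h)%N -> exists v q, (uu h * v = q * (3 ^ (h + h.+1) - 1) + 1)%N.
Proof.
move=> h2.
set X := (3 ^ h)%N.
have X9 : (9 <= X)%N by rewrite /X (leq_trans _ (leq_pexp2l _ h2)).
have e3 : (3 ^ (h + h.+1) = 3 * X * X)%N by rewrite expnD expnS /X; lia.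
set R := (X %/ 2)%N.
have XR : X = (2 * R + 1)%N.
  have := exp3mod4 h; rewrite -/X => hm; rewrite /R; case: (odd h) hm => hm; lia.
have Rpar : odd R = odd h.
  have := exp3mod4 h; rewrite -/X XR => hm.
  case: (odd h) hm => hm; apply/eqP; rewrite ?eqb_id ?eqbF_neg; apply/negP => /=; lia.
set n := (3 ^ (h + h.+1) - 1)%N.
have hn : (n + 1 = 3 * X * X)%N by rewrite /n e3; lia.
have hnR : n = (12 * R * R + 12 * R + 2)%N by rewrite XR in hn; lia.
have Rpar' : (R %% 2 = odd h)%N by rewrite modn2 Rpar.
rewrite /uu -/n -/X; move: Rpar'.
case: (boolP (odd h)) => oh /= Rpar'.
  have huR : (n %/ 2 - (X + 1) = 6 * R * R + 4 * R - 1)%N by rewrite hnR XR; lia.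
  set s := (R %/ 2)%N; have hs : R = (2 * s + 1)%N by rewrite /s; lia.
  exists (3 * R)%N, (3 * s + 1)%N; rewrite huR hnR hs; exact: I1.
have huR : (n %/ 2 - (X - 1) = 6 * R * R + 4 * R + 1)%N by rewrite hnR XR; lia.
set s := (R %/ 2)%N; have hs : R = (2 * s)%N by rewrite /s; lia.
exists (3 * (R + 1))%N, (3 * s + 1)%N; rewrite huR hnR hs; exact: I2.
Qed.

Definition cnt m r := (\sum_(0 <= j < 3 ^ m) (w3 m j %% 4 == r))%N.

Lemma sum3 (G : nat -> nat) N :
  (\sum_(0 <= j < 3 * N) G j = \sum_(0 <= q < N) (G (3 * q) + G (3 * q + 1) + G (3 * q + 2)))%N.
Proof.
elim: N => [|N IH]; first by rewrite muln0 !big_geq.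
rewrite [RHS]big_nat_recr //= -IH.
have -> : (3 * N.+1 = (3 * N + 2).+1)%N by lia.
rewrite big_nat_recr /=; last by lia.
have -> : (3 * N + 2 = (3 * N + 1).+1)%N by lia.
rewrite big_nat_recr /=; last by lia.
have -> : (3 * N + 1 = (3 * N).+1)%N by lia.
rewrite big_nat_recr /=; last by lia.
by rewrite -!addnA.
Qed.

Lemma cntS m r : (r < 4)%N ->
  cnt m.+1 r = (cnt m r + cnt m ((r + 3) %% 4) + cnt m ((r + 2) %% 4))%N.
Proof.
move=> hr; rewrite /cnt expnS sum3 -!big_split /=.
apply: eq_bigr => q _.
rewrite -{1}[(3 * q)%N]addn0 (w3S' m q 0) // (w3S' m q 1) // (w3S' m q 2) //.
move: (w3 m q) => w.
have e : forall d, (d < 3)%N -> ((d + w) %% 4 == r) = (w %% 4 == (r + 4 - d) %% 4).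
  by move=> d hd; apply/idP/idP => /eqP H; apply/eqP; lia.
rewrite (e 0%N) // (e 1%N) // (e 2%N) //.
have -> : (r + 4 - 0 = r + 4)%N by lia.
have -> : (r + 4 - 1 = r + 3)%N by lia.
have -> : (r + 4 - 2 = r + 2)%N by lia.
by rewrite modnDr (modn_small hr).
Qed.

Lemma cnt_form m :
 let t := (3 ^ m)%N in
 ((m %% 4 = 0 -> 4 * cnt m 0 = t + 3 /\ 4 * cnt m 1 + 1 = t /\ 4 * cnt m 2 + 1 = t /\ 4 * cnt m 3 + 1 = t) /\
  (m %% 4 = 1 -> 4 * cnt m 0 = t + 1 /\ 4 * cnt m 1 = t + 1 /\ 4 * cnt m 2 = t + 1 /\ 4 * cnt m 3 + 3 = t) /\
  (m %% 4 = 2 -> 4 * cnt m 0 + 1 = t /\ 4 * cnt m 1 + 1 = t /\ 4 * cnt m 2 = t + 3 /\ 4 * cnt m 3 + 1 = t) /\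
  (m %% 4 = 3 -> 4 * cnt m 0 = t + 1 /\ 4 * cnt m 1 + 3 = t /\ 4 * cnt m 2 = t + 1 /\ 4 * cnt m 3 = t + 1))%N.
Proof.
elim: m => [|m IH] /=.
  rewrite /cnt expn0 !big_nat1 !w3_0 /=; lia.
rewrite !cntS //= expnS.
move: IH; move: (cnt m 0) (cnt m 1) (cnt m 2) (cnt m 3) (3 ^ m)%N => a b c d t.
lia.
Qed.

Lemma card_T m : (1 <= m)%N -> odd m ->
  #|Tset 1 2 m| = (if m %% 4 == 1 then (3 ^ m - 1) %/ 2 else (3 ^ m - 3) %/ 2)%N.
Proof.
move=> m1 om.
have om2 : (m %% 2 = 1)%N by rewrite modn2 om.
have t1 : (1 <= 3 ^ m)%N by rewrite expn_gt0.
set n := (3 ^ m - 1)%N.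
have e1 : #|Tset 1 2 m| = (\sum_(0 <= j < n) ((w3 m j %% 4 == 1) + (w3 m j %% 4 == 2)))%N.
  rewrite -sum1_card big_mkcond /= big_mkord; apply: eq_bigr => j _.
  rewrite inE; case: (posnP j) => [->|jp] /=; first by rewrite w3zero.
  by case: eqP; case: eqP => //= ->.
have e2 : (cnt m 1 + cnt m 2 = #|Tset 1 2 m| + 1)%N.
  rewrite e1 /cnt -big_split /=.
  have -> : (3 ^ m = n.+1)%N by rewrite /n; lia.
  rewrite big_nat_recr //=; congr (_ + _)%N.
  have := w3compl m 0 t1; rewrite subn0 w3zero subn0 -/n => ->.
  have : (2 * m %% 4 = 2)%N by lia.
  by move=> ->.
have := cnt_form m => /= -[_ [f1 [_ f3]]].
have : (m %% 4 = 1 \/ m %% 4 = 3)%N by lia.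
case=> hm; rewrite hm /=.
  move: (f1 hm) e2; rewrite /n; move: (3 ^ m)%N (cnt m 0) (cnt m 1) (cnt m 2) (cnt m 3) (#|Tset 1 2 m|) => t b c d e a. lia.
move: (f3 hm) e2; rewrite /n; move: (3 ^ m)%N (cnt m 0) (cnt m 1) (cnt m 2) (cnt m 3) (#|Tset 1 2 m|) => t b c d e a. lia.
Qed.

Lemma w3rot {m j} : (1 <= m)%N -> (j < 3 ^ m - 1)%N ->
  w3 m ((3 * j) %% (3 ^ m - 1)) = w3 m j /\ (((3 * j) %% (3 ^ m - 1) == 0) = (j == 0))%N.
Proof.
case: m => [//|m] _ hj.
set a := (j %/ 3 ^ m)%N; set r := (j %% 3 ^ m)%N.
have t1 : (1 <= 3 ^ m)%N by rewrite expn_gt0.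
have ej : j = (a * 3 ^ m + r)%N by rewrite /a /r -divn_eq.
have hr : (r < 3 ^ m)%N by rewrite /r ltn_mod.
have ha : (a < 3)%N.
  move: hj; rewrite expnS ej; move: (3 ^ m)%N t1 hr => t; nia.
have hx : (3 * r + a < 3 ^ m.+1 - 1)%N.
  move: hj; rewrite expnS ej; move: (3 ^ m)%N t1 hr => t; nia.
have -> : ((3 * j) %% (3 ^ m.+1 - 1) = 3 * r + a)%N.
  have -> : (3 * j = a * (3 ^ m.+1 - 1) + (3 * r + a))%N.
    rewrite ej expnS; move: (3 ^ m)%N t1 => t; nia.
  by rewrite modnMDl modn_small.
have := w3cat m 1 a r hr; rewrite addn1 => E.
rewrite w3S' // ej E w3S w3_0 (modn_small ha) addn0 addnC.
split=> //; apply/idP/idP => /eqP H; apply/eqP; move: H; move: (3 ^ m)%N t1 => t; nia.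
Qed.

Lemma w3rot_inj {m j} : (1 <= m)%N -> (j < 3 ^ m - 1)%N ->
  ((3 ^ m.-1 * ((3 * j) %% (3 ^ m - 1))) %% (3 ^ m - 1) = j)%N.
Proof.
case: m => [//|m] _ hj /=.
rewrite modnMmr mulnA -expnSr.
have t1 : (1 <= 3 ^ m.+1)%N by rewrite expn_gt0.
have -> : (3 ^ m.+1 * j = j * (3 ^ m.+1 - 1) + j)%N by move: (3 ^ m.+1)%N t1 => t; nia.
by rewrite modnMDl modn_small.
Qed.

Local Open Scope ring_scope.

Section WP.
Variable n : nat.

Lemma coef_word (c : 'rV['F_3]_n) (i : 'I_n) : (word_poly c)`_i = c 0 i.
Proof.
rewrite /word_poly coef_sum (bigD1 i) //= coefCM coefXn eqxx mulr1 big1 ?addr0 //.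
by move=> j ji; rewrite coefCM coefXn (_ : (i == j :> nat) = false) ?mulr0 //; apply/eqP => E; move/eqP: ji; apply; apply: val_inj.
Qed.

Lemma size_word (c : 'rV['F_3]_n) : (size (word_poly c) <= n)%N.
Proof.
apply/leq_sizeP => j hj; rewrite /word_poly coef_sum big1 // => i _.
rewrite coefCM coefXn; case: eqP => [E|]; last by rewrite mulr0.
by move: hj (ltn_ord i); rewrite E; lia.
Qed.

Lemma word_poly_eq (c : 'rV['F_3]_n) (p : {poly 'F_3}) :
  (forall i : 'I_n, p`_i = c 0 i) -> (size p <= n)%N -> word_poly c = p.
Proof.
move=> hc hs; apply/polyP => j.
case: (ltnP j n) => hj.
  by rewrite (coef_word c (Ordinal hj)) -(hc (Ordinal hj)).
have := size_word c => /leq_sizeP -> //.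
by move/leq_sizeP: hs => ->.
Qed.

Definition rowOf (p : {poly 'F_3}) : 'rV['F_3]_n := \row_i p`_i.

Lemma rowOfK (p : {poly 'F_3}) : (size p <= n)%N -> word_poly (rowOf p) = p.
Proof. by move=> hs; apply: word_poly_eq => // i; rewrite mxE. Qed.

Lemma wordK c : rowOf (word_poly c) = c.
Proof. by apply/rowP => i; rewrite mxE coef_word. Qed.

Lemma word_lin a (c c' : 'rV['F_3]_n) :
  word_poly (a *: c + c') = a%:P * word_poly c + word_poly c'.
Proof.
apply: word_poly_eq.
  by move=> i; rewrite coefD coefCM !coef_word !mxE.
have := size_word c; have := size_word c'.
move=> h1 h2; rewrite (leq_trans (size_polyD _ _)) // geq_max h1 andbT.
rewrite (leq_trans (size_polyMleq _ _)) // size_polyC; move: h2; case: (a != 0) => /= h2; lia.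
Qed.

Lemma word0 : word_poly (0 : 'rV['F_3]_n) = 0.
Proof. by apply: word_poly_eq => [i|]; rewrite ?mxE ?coef0 ?size_poly0. Qed.

End WP.

Section Alg.
Variable F : finFieldType.
Hypothesis ch3 : (3%:R : F) = 0.

Lemma natr3 k : (k%:R : F) = (k %% 3)%:R.
Proof. by rewrite {1}(divn_eq k 3) natrD natrM ch3 mulr0 add0r. Qed.

Lemma emb3D (a b : 'F_3) : emb3 F (a + b) = emb3 F a + emb3 F b.
Proof. by rewrite /emb3 -natrD [RHS]natr3. Qed.

Lemma emb3_zmod : zmod_morphism (emb3 F).
Proof. by move=> a b; apply/eqP; rewrite eq_sym subr_eq -emb3D subrK. Qed.

Lemma emb3_mon : monoid_morphism (emb3 F).
Proof. split; first by []. by move=> a b; rewrite /emb3 -natrM [RHS]natr3. Qed.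

HB.instance Definition _ := GRing.isZmodMorphism.Build 'F_3 F (emb3 F) emb3_zmod.
HB.instance Definition _ := GRing.isMonoidMorphism.Build 'F_3 F (emb3 F) emb3_mon.

Lemma emb3_inj : injective (emb3 F).
Proof. exact: fmorph_inj. Qed.

Definition inv3 (x : F) : 'F_3 := if x == 0 then 0 else if x == 1 then 1 else -1.

Lemma inv3K x : x ^+ 3 = x -> emb3 F (inv3 x) = x.
Proof.
move=> hx; rewrite /inv3.
have : x * (x - 1) * (x + 1) = 0.
  by rewrite -mulrA -subr_sqr expr1n mulrBr mulr1 -exprS hx subrr.
move/eqP; rewrite !mulf_eq0 => /orP[/orP[]|] /eqP.
- by move=> ->; rewrite eqxx rmorph0.
- by move/eqP; rewrite subr_eq0 => /eqP ->; rewrite oner_eq0 eqxx rmorph1.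
move/eqP; rewrite addr_eq0 => /eqP ->.
have h1 : (-1 : F) != 0 by rewrite oppr_eq0 oner_eq0.
have h2 : (-1 : F) != 1.
  apply/eqP => E; have : (2%:R : F) = 0 by rewrite -[2%N]/(1 + 1)%N natrD -{1}E addNr.
  move=> E2; move: ch3; rewrite -[3%N]/(2 + 1)%N natrD E2 add0r => /eqP; by rewrite oner_eq0.
by rewrite (negPf h1) (negPf h2) rmorphN1.
Qed.


Lemma hornerW n (c : 'rV['F_3]_n) x :
  (map_poly (emb3 F) (word_poly c)).[x] = \sum_(i < n) emb3 F (c 0 i) * x ^+ i.
Proof.
rewrite /word_poly rmorph_sum horner_sum; apply: eq_bigr => i _.
by rewrite rmorphM /= map_polyC map_polyXn hornerCM hornerXn.
Qed.

Lemma bch n (d : 'rV['F_3]_n) (beta : F) L : d != 0 -> beta != 0 ->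
  (forall i j : 'I_n, beta ^+ i = beta ^+ j -> i = j) ->
  (forall k, (1 <= k <= L)%N -> \sum_(i < n) emb3 F (d 0 i) * (beta ^+ k) ^+ i = 0) ->
  (L < hwt d)%N.
Proof.
move=> d0 b0 binj hz; rewrite ltnNge; apply/negP => hL.
set S := [set i | d 0 i != 0].
have hS : hwt d = #|S| by [].
have [i0 hi0] : exists i0, d 0 i0 != 0.
  case: (pickP (fun i => d 0 i != 0)) => [i0 h|h]; first by exists i0.
  move/eqP: d0; case; apply/rowP => j; rewrite mxE.
  by move: (h j) => /negbFE /eqP.
set Q := \prod_(j <- enum (S :\ i0)) ('X - (beta ^+ j)%:P).
have sQ : size Q = #|S|.
  by rewrite size_prod_XsubC -cardE (cardsD1 i0 S) inE hi0.
have QE : forall x, Q.[x] = \prod_(j <- enum (S :\ i0)) (x - beta ^+ j).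
  by move=> x; rewrite horner_prod; apply: eq_bigr => j _; rewrite hornerXsubC.
set a := fun i : 'I_n => emb3 F (d 0 i).
have E1 : \sum_(i < n) a i * beta ^+ i * Q.[beta ^+ i] = 0.
  have -> : \sum_(i < n) a i * beta ^+ i * Q.[beta ^+ i] =
      \sum_(t < size Q) Q`_t * \sum_(i < n) a i * (beta ^+ t.+1) ^+ i.
    under eq_bigr => i _ do rewrite horner_coef mulr_sumr.
    rewrite exchange_big /=; apply: eq_bigr => t _; rewrite mulr_sumr.
    apply: eq_bigr => i _.
    have e : beta ^+ i * (beta ^+ i) ^+ t = (beta ^+ t.+1) ^+ i.
      by rewrite -!exprM -exprD; congr (_ ^+ _); lia.
    by rewrite -e; ring.
  apply: big1 => t _; rewrite hz ?mulr0 //.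
  have ht : (nat_of_ord t < #|S|)%N by rewrite -sQ. move: ht; rewrite -hS; lia.
have E2 : \sum_(i < n) a i * beta ^+ i * Q.[beta ^+ i] != 0.
  rewrite (bigD1 i0) //= big1 ?addr0.
    rewrite !mulf_neq0 ?expf_neq0 //; first by rewrite fmorph_eq0.
    rewrite QE prodf_seq_neq0; apply/allP => j; rewrite mem_enum !inE => /andP[jn _] /=.
    rewrite subr_eq0; apply/eqP => E; move/eqP: jn; apply; by rewrite (binj _ _ E).
  move=> i ni0; case: (eqVneq (d 0 i) 0) => [E|nz].
    by rewrite /a E rmorph0 !mul0r.
  apply/eqP; rewrite mulf_eq0 QE prodf_seq_eq0; apply/orP; right.
  apply/hasP; exists i; first by rewrite mem_enum !inE ni0 nz.
  by rewrite /= subrr eqxx.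
by move/eqP: E2.
Qed.

Section Code.
Variables (alpha : F) (m : nat).
Hypothesis m1 : (1 <= m)%N.
Hypothesis prim : (3 ^ m - 1).-primitive_root alpha.

Lemma npos : (0 < 3 ^ m - 1)%N.
Proof. have : (3 ^ 1 <= 3 ^ m)%N by rewrite leq_pexp2l. lia. Qed.

Definition rotj (j : 'I_(3 ^ m - 1)) : 'I_(3 ^ m - 1) := Ordinal (ltn_pmod (3 * j) npos).

Lemma rotj_inj : injective rotj.
Proof.
move=> i j /(congr1 val) /= E.
apply: val_inj; rewrite /= -(w3rot_inj m1 (ltn_ord i)) -(w3rot_inj m1 (ltn_ord j)).
by rewrite E.
Qed.

Lemma rotjT j : (rotj j \in Tset 1 2 m) = (j \in Tset 1 2 m).
Proof.
have [w z] := w3rot m1 (ltn_ord j).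
by rewrite !inE /= w !lt0n z.
Qed.

Lemma ch3' : (3 \in [pchar F])%N.
Proof. by rewrite inE /= ch3 eqxx. Qed.

Lemma g_frob i : ((gpoly alpha 1 2 m)`_i) ^+ 3 = (gpoly alpha 1 2 m)`_i.
Proof.
have E : map_poly (pFrobenius_aut ch3') (gpoly alpha 1 2 m) = gpoly alpha 1 2 m.
  rewrite /gpoly rmorph_prod.
  rewrite [RHS](reindex_inj rotj_inj) /=.
  apply: eq_big => [j|j _]; first by rewrite rotjT.
  rewrite map_polyXsubC /= pFrobenius_autE -exprM.
  by rewrite -(expr_mod _ (prim_expr_order prim)) mulnC.
by rewrite -{2}E coef_map /= pFrobenius_autE.
Qed.

Definition g0 := map_poly inv3 (gpoly alpha 1 2 m).

Lemma g0E : map_poly (emb3 F) g0 = gpoly alpha 1 2 m.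
Proof.
apply/polyP => i; rewrite coef_map /= /g0 coef_map_id0; last by rewrite /inv3 eqxx.
by rewrite inv3K // g_frob.
Qed.

Lemma size_g : size (gpoly alpha 1 2 m) = (#|Tset 1 2 m|).+1.
Proof. by rewrite /gpoly -big_enum size_prod_XsubC cardE. Qed.

Lemma size_g0 : size g0 = (#|Tset 1 2 m|).+1.
Proof.
rewrite -size_g -g0E size_map_inj_poly //; exact: emb3_inj.
Qed.

Lemma code_dvd c : (c \in cyc_code alpha 1 2 m) = (g0 %| word_poly c).
Proof. by rewrite inE -g0E dvdp_map. Qed.


Local Notation n := (3 ^ m - 1)%N.
Local Notation T := (Tset 1 2 m).
Local Notation C := (cyc_code alpha 1 2 m).

Lemma cardT_lt : (#|T| < n)%N.
Proof.
set z := Ordinal npos.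
have sub : T \subset [set~ z].
  by apply/subsetP => j; rewrite !inE => /andP[hj _]; apply/eqP => E; move: hj; rewrite E.
by move: (subset_leq_card sub); rewrite cardsC1 card_ord; have := npos; lia.
Qed.

Lemma g0_neq0 : g0 != 0.
Proof. by rewrite -size_poly_eq0 size_g0. Qed.

Definition phi (q : 'rV['F_3]_(n - #|T|)) : 'rV['F_3]_n := rowOf n (g0 * word_poly q).

Lemma size_phi (q : 'rV['F_3]_(n - #|T|)) : (size (g0 * word_poly q)%R <= n)%N.
Proof.
rewrite (leq_trans (size_polyMleq _ _)) // size_g0.
have := @size_word _ q; have := cardT_lt; set s := size _; set t := #|T|; clearbody s t; lia.
Qed.

Lemma phi_inj : injective phi.
Proof.
move=> q q' /(congr1 (@word_poly n)); rewrite /phi !rowOfK ?size_phi //.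
move/(mulfI g0_neq0) => /(congr1 (rowOf (n - #|T|))).
by rewrite !wordK.
Qed.

Lemma C_img : C = phi @: setT.
Proof.
apply/setP => c; apply/idP/imsetP.
  rewrite code_dvd => hd.
  set Q := (word_poly c %/ g0).
  have eQ : Q * g0 = word_poly c by rewrite divpK.
  have sQ : (size Q <= n - #|T|)%N.
    have [->|Q0] := eqVneq Q 0; first by rewrite size_poly0.
    have := @size_word _ c; rewrite -eQ (size_mul Q0 g0_neq0) size_g0; have := cardT_lt; set s := size Q; set t := #|T|; clearbody s t; lia.
  exists (rowOf (n - #|T|) Q); first by [].
  by rewrite /phi rowOfK // mulrC eQ wordK.
move=> [q _ ->]; rewrite code_dvd /phi rowOfK ?size_phi //; exact: dvdp_mulIl.
Qed.

Lemma card_C : #|C| = (3 ^ (n - #|T|))%N.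
Proof.
rewrite C_img card_imset; last exact: phi_inj.
by rewrite cardsT card_mx card_Fp // mul1n.
Qed.

Lemma C_lin a c c' : c \in C -> c' \in C -> a *: c + c' \in C.
Proof.
rewrite !code_dvd word_lin => h1 h2; rewrite dvdp_add //; exact: dvdp_mull.
Qed.

Lemma C0 : 0 \in C.
Proof. by rewrite code_dvd word0 dvdp0. Qed.

Lemma dim_C : code_dim C = (n - #|T|)%N.
Proof.
rewrite /code_dim.
set V := (<<enum C>>)%VS.
have memV : forall v, (v \in V) = (v \in C).
  move=> v; apply/idP/idP => hv; last by apply: memv_span; rewrite mem_enum.
  have := coord_span (X := in_tuple (enum C)) hv => ->.
  apply: (big_ind (fun v => v \in C)) => //; first exact: C0.
    by move=> x y hx hy; rewrite -[x]scale1r C_lin.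
  move=> i _; rewrite -[_ *: _]addr0; apply: C_lin; last exact: C0.
  by rewrite -mem_enum mem_nth // size_tuple.
have := card_vspace V.
rewrite (eq_card memV) card_C card_Fp //.
by move/expnI => ->.
Qed.

Lemma alpha_neq0 : alpha != 0.
Proof.
apply/eqP => a0; have := prim_expr_order prim; rewrite a0 expr0n.
by have := npos; case: (3 ^ m - 1)%N => // k _ /eqP; rewrite eq_sym oner_eq0.
Qed.


Lemma root_C c (x : 'I_n) : c \in C -> x \in T ->
  (map_poly (emb3 F) (word_poly c)).[alpha ^+ x] = 0.
Proof.
rewrite inE => hd hx.
have gx : (gpoly alpha 1 2 m).[alpha ^+ x] = 0.
  by rewrite /gpoly horner_prod (bigD1 x) //= hornerXsubC subrr mul0r.
by rewrite -(divpK hd) hornerM gx mulr0.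
Qed.

Lemma dist h c c' : m = (h + h.+1)%N -> (2 <= h)%N -> c \in C -> c' \in C -> c != c' ->
  (LL h < hwt (c - c'))%N.
Proof.
move=> em h2 hc hc'; rewrite -subr_eq0 => d0.
have [v [q0 hv]] := uu_inv h h2.
rewrite -em in hv.
have a1 := prim_expr_order prim.
apply: (@bch _ _ (alpha ^+ uu h)) => //.
- by rewrite expf_neq0 // alpha_neq0.
- move=> i j; rewrite -!exprM => E.
  have ht : forall t, alpha ^+ (uu h * t * v) = alpha ^+ t.
    move=> t; rewrite mulnAC hv mulnDl mul1n exprD.
    have -> : (q0 * n * t = n * (q0 * t))%N by rewrite mulnAC mulnC.
    by rewrite exprM a1 expr1n mul1r.
  have E' : alpha ^+ i = alpha ^+ j.
    by rewrite -ht -[RHS]ht (exprM _ (uu h * i)) (exprM _ (uu h * j)) E.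
  apply: val_inj => /=; move/eqP: E'; rewrite (eq_prim_root_expr prim) !modn_small //.
  by move/eqP.
move=> k hk.
have [q [x [ex [x0 [xn xw]]]]] := key h k h2 hk.
rewrite -em in ex xn xw.
have hx : Ordinal xn \in T by rewrite inE /= x0.
have -> : \sum_(i < n) emb3 F ((c - c') 0 i) * (alpha ^+ uu h ^+ k) ^+ i =
   (map_poly (emb3 F) (word_poly c)).[alpha ^+ x] - (map_poly (emb3 F) (word_poly c')).[alpha ^+ x].
  rewrite !hornerW -sumrB; apply: eq_bigr => i _.
  rewrite !mxE rmorphD rmorphN -(exprM alpha (uu h) k) ex exprD (mulnC q n) exprM a1 expr1n mul1r.
  by rewrite mulrDl mulNr.
by rewrite (root_C c (Ordinal xn) hc hx) (root_C c' (Ordinal xn) hc' hx) subrr.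
Qed.

End Code.
End Alg.

Theorem theorem4 (F : finFieldType) (alpha : F) (m : nat) :
  (5 <= m)%N -> odd m ->
  #|F| = (3 ^ m)%N ->
  (3 ^ m - 1).-primitive_root alpha ->
  let n := (3 ^ m - 1)%N in
  let C := cyc_code alpha 1 2 m in
  (* minimum distance bound: any two distinct codewords are at Hamming distance >= bound *)
  (forall c c', c \in C -> c' \in C -> c != c' ->
     (hdist c c' >= (if m %% 4 == 1 then (3 ^ ((m - 1) %/ 2) + 13) %/ 2
                     else (3 ^ ((m - 1) %/ 2) + 11) %/ 2))%N) /\
  (* dimension *)
  code_dim C = (if m %% 4 == 1 then n %/ 2 else (n + 2) %/ 2)%N.
Proof.
move=> m5 om cardF prim n C.
have ch : (3%:R : F) = 0 by apply: pcharf0; apply: (card_finPcharP cardF).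
have m1 : (1 <= m)%N by lia.
have om2 : (m %% 2 = 1)%N by rewrite modn2 om.
set h := ((m - 1) %/ 2)%N.
have em : m = (h + h.+1)%N by rewrite /h; lia.
have h2 : (2 <= h)%N by rewrite /h; lia.
have hp : (h %% 2 = odd h)%N by rewrite modn2.
split.
  move=> c c' hc hc' ne; rewrite /hdist.
  have := @dist F ch alpha m m1 prim h c c' em h2 hc hc' ne.
  have hX : (3 ^ h %% 2 = 1)%N by rewrite modn2 oddX orbT.
  rewrite /LL; move: hp; case: (odd h) => /= hp.
    have -> : (m %% 4 == 1)%N = false by apply/eqP; lia.
    move=> H; apply: (leq_trans _ H); move: (3 ^ h)%N hX => X hX; lia.
  have -> : (m %% 4 == 1)%N = true by apply/eqP; lia.
  move=> H; apply: (leq_trans _ H); move: (3 ^ h)%N hX => X hX; lia.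
rewrite /C (@dim_C F ch alpha m m1 prim) card_T // -/n.
have t1 : (3 ^ m %% 2 = 1)%N by rewrite modn2 oddX orbT.
have t3 : (3 <= 3 ^ m)%N by rewrite -{1}(expn1 3) leq_pexp2l.
rewrite /n; case: (m %% 4 == 1)%N; move: (3 ^ m)%N t1 t3 => t t1 t3; lia.
Qed.
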